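(* Assume $p\in W^{1,\infty}((0,\infty)\times\mathbb{R})$ satisfies $p_*\mathbb{1}_{\{s>s_*\}}\le p(s,S)\le p_\infty$ for all $s\ge0$, $S\in\mathbb{R}$, for some constants $p_*,p_\infty,s_*>0$. Then the function $F:\mathbb{R}\to\mathbb{R}_+$ defined by $$F(S)=\left(\int_0^\infty e^{-\int_0^sp(\tau,S)\,d\tau}\,ds\right)^{-1}$$ is bounded and Lipschitz. *)

(* Defs.v *)
From Stdlib Require Import Reals.
From Coquelicot Require Import Coquelicot.
Open Scope R_scope.

Definition ind_gt (sstar s : R) : R := if Rlt_dec sstar s then 1 else 0.

Definition expfac (p : R -> R -> R) (S s : R) : R :=
  exp (- RInt (fun tau => p tau S) 0 s).

Definition F (p : R -> R -> R) (S : R) : R :=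
  / RInt_gen (expfac p S) (at_point 0) (Rbar_locally p_infty).

(* p in W^{1,oo}((0,oo) x R), taken as its (Lipschitz) continuous representative:
   bounded and Lipschitz on (0,oo) x R. *)
Definition W1inf (p : R -> R -> R) : Prop :=
  (exists M, forall s S, 0 < s -> Rabs (p s S) <= M) /\
  (exists L, forall s1 s2 S1 S2, 0 < s1 -> 0 < s2 ->
      Rabs (p s1 S1 - p s2 S2) <= L * (Rabs (s1 - s2) + Rabs (S1 - S2))).

(* Main.v *)
Require Import Defs.
From Stdlib Require Import Reals Lra.
From Coquelicot Require Import Coquelicot.
Open Scope R_scope.

Lemma ball_R (x e y : R) : ball x e y <-> Rabs (y - x) < e.
Proof. split; intro H; exact H. Qed.

Lemma lip_cont (g : R -> R) x K :
  (forall u, Rabs (g u - g x) <= K * Rabs (u - x)) -> continuous g x.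
Proof.
  intro H. apply filterlim_locally. intro eps.
  assert (Hp : 0 < eps / (Rabs K + 1)).
  { apply Rdiv_lt_0_compat. apply cond_pos. pose proof (Rabs_pos K); lra. }
  exists (mkposreal _ Hp). intros u Hu. rewrite ball_R in Hu. simpl in Hu.
  apply ball_R. eapply Rle_lt_trans. apply H.
  pose proof (Rabs_pos K). pose proof (Rle_abs K). pose proof (Rabs_pos (u - x)).
  apply Rle_lt_trans with ((Rabs K + 1) * Rabs (u - x)). nra.
  apply Rmult_lt_reg_r with (/ (Rabs K + 1)). apply Rinv_0_lt_compat; lra.
  replace ((Rabs K + 1) * Rabs (u - x) * / (Rabs K + 1)) with (Rabs (u - x)) by (field; lra).
  exact Hu.
Qed.

Lemma ext0 (f : R -> R) L (HL : 0 <= L)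
  (Hlip : forall u v, 0 < u -> 0 < v -> Rabs (f u - f v) <= L * Rabs (u - v)) :
  exists g : R -> R, (forall u, 0 < u -> g u = f u) /\
    forall u v, Rabs (g u - g v) <= L * Rabs (u - v).
Proof.
  assert (Hy : exists y, filterlim f (at_right 0) (locally y)).
  { apply (filterlim_locally_cauchy (F := at_right 0) f).
    intro eps.
    assert (Hp : 0 < eps / (L + 1)).
    { apply Rdiv_lt_0_compat. apply cond_pos. lra. }
    exists (fun u => 0 < u < eps / (L + 1)). split.
    - exists (mkposreal _ Hp). intros u Hu H0. rewrite ball_R in Hu. simpl in Hu.
      rewrite Rminus_0_r in Hu. apply Rabs_def2 in Hu. lra.
    - intros u v [Hu1 Hu2] [Hv1 Hv2]. apply ball_R.
      eapply Rle_lt_trans. rewrite Rabs_minus_sym. apply Hlip; lra.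
      apply Rle_lt_trans with (L * (eps / (L + 1))).
      apply Rmult_le_compat_l; auto. apply Rabs_le; lra.
      apply Rmult_lt_reg_r with (L + 1). lra.
      replace (L * (eps / (L + 1)) * (L + 1)) with (L * eps) by (field; lra).
      pose proof (cond_pos eps). nra. }
  destruct Hy as [y Hy].
  assert (Hb : forall u, 0 < u -> Rabs (f u - y) <= L * u).
  { intros u Hu. apply Rnot_lt_le. intro Hc.
    set (d := (Rabs (f u - y) - L * u) / (2 * (L + 1))).
    assert (Hd : 0 < d). { unfold d. apply Rdiv_lt_0_compat; lra. }
    pose proof (proj1 (filterlim_locally f y) Hy (mkposreal _ Hd)) as H1.
    destruct H1 as [del H1].
    set (v := Rmin (del / 2) d).
    assert (Hv0 : 0 < v). { unfold v. apply Rmin_glb_lt. pose proof (cond_pos del); lra. lra. }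
    assert (Hvd : v <= d) by apply Rmin_r.
    assert (Hvdel : v <= del / 2) by apply Rmin_l.
    assert (H2 : ball y d (f v)).
    { apply (H1 v). apply ball_R. rewrite Rminus_0_r, Rabs_pos_eq by lra.
      pose proof (cond_pos del). lra. exact Hv0. }
    assert (H2' : Rabs (f v - y) < d) by exact H2.
    pose proof (Hlip u v Hu Hv0).
    assert (Rabs (u - v) <= u + v) by (apply Rabs_le; lra).
    assert (Rabs (f u - y) <= Rabs (f u - f v) + Rabs (f v - y)).
    { replace (f u - y) with ((f u - f v) + (f v - y)) by ring. apply Rabs_triang. }
    assert (L * Rabs (u - v) <= L * (u + v)) by (apply Rmult_le_compat_l; lra).
    assert (L * v <= L * d) by (apply Rmult_le_compat_l; lra).
    assert (L * d + d = (Rabs (f u - y) - L * u) / 2) by (unfold d; field; lra).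
    assert (L * (u + v) = L * u + L * v) by ring.
    lra. }
  exists (fun u => if Rlt_dec 0 u then f u else y). split.
  - intros u Hu. destruct (Rlt_dec 0 u); [reflexivity | lra].
  - intros u v. destruct (Rlt_dec 0 u) as [Hu|Hu]; destruct (Rlt_dec 0 v) as [Hv|Hv];
    try apply Rnot_lt_le in Hu; try apply Rnot_lt_le in Hv.
    + apply Hlip; assumption.
    + eapply Rle_trans. apply Hb; assumption. apply Rmult_le_compat_l; auto.
      rewrite Rabs_pos_eq; lra.
    + rewrite (Rabs_minus_sym y (f v)). eapply Rle_trans. apply Hb; assumption.
      apply Rmult_le_compat_l; auto. rewrite (Rabs_minus_sym u v), Rabs_pos_eq; lra.
    + unfold Rminus. rewrite Rplus_opp_r, Rabs_R0. pose proof (Rabs_pos (u + - v)). nra.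
Qed.

Lemma RInt_abs_le (f g : R -> R) a b : a <= b -> ex_RInt f a b -> ex_RInt g a b ->
  (forall x, a < x < b -> Rabs (f x) <= g x) -> Rabs (RInt f a b) <= RInt g a b.
Proof.
  intros Hab Hf Hg H. apply Rabs_le. split.
  - assert (E : RInt (fun x => - g x) a b = - RInt g a b).
    { exact (RInt_opp g a b Hg). }
    rewrite <- E. apply RInt_le; auto.
    exact (ex_RInt_opp g a b Hg).
    intros x Hx. specialize (H x Hx). pose proof (Rle_abs (- f x)). rewrite Rabs_Ropp in H0. lra.
  - apply RInt_le; auto. intros x Hx. specialize (H x Hx). pose proof (Rle_abs (f x)). lra.
Qed.

Lemma RInt_const_R a b c : RInt (fun _ => c) a b = (b - a) * c.
Proof. rewrite RInt_const. reflexivity. Qed.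

Lemma RInt_bound (f : R -> R) a b c : a <= b -> ex_RInt f a b ->
  (forall x, a < x < b -> Rabs (f x) <= c) -> Rabs (RInt f a b) <= (b - a) * c.
Proof.
  intros Hab Hf H. rewrite <- RInt_const_R. apply RInt_abs_le; auto. apply ex_RInt_const.
Qed.

Lemma RInt_lower (f : R -> R) a b c : a <= b -> ex_RInt f a b ->
  (forall x, a < x < b -> c <= f x) -> (b - a) * c <= RInt f a b.
Proof.
  intros Hab Hf H. rewrite <- RInt_const_R. apply RInt_le; auto. apply ex_RInt_const.
Qed.

Lemma RInt_upper (f : R -> R) a b c : a <= b -> ex_RInt f a b ->
  (forall x, a < x < b -> f x <= c) -> RInt f a b <= (b - a) * c.
Proof.
  intros Hab Hf H. rewrite <- RInt_const_R. apply RInt_le; auto. apply ex_RInt_const.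
Qed.

Lemma exp_le_exp x y : x <= y -> exp x <= exp y.
Proof. intro H. destruct (Rle_lt_or_eq_dec _ _ H) as [H1|H1].
  apply Rlt_le, exp_increasing, H1. rewrite H1; apply Rle_refl. Qed.

Lemma exp_diff a b : Rabs (exp (- a) - exp (- b)) <= exp (- Rmin a b) * Rabs (a - b).
Proof.
  assert (K : forall a b, a <= b -> Rabs (exp (- a) - exp (- b)) <= exp (- a) * (b - a)).
  { clear. intros a b Hab.
    assert (exp (- b) <= exp (- a)) by (apply exp_le_exp; lra).
    rewrite Rabs_pos_eq by lra.
    pose proof (exp_ineq1_le (- (b - a))).
    replace (exp (- b)) with (exp (- a) * exp (- (b - a))).
    2:{ rewrite <- exp_plus. f_equal. ring. }
    pose proof (exp_pos (- a)). nra. }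
  destruct (Rle_dec a b) as [H|H].
  - rewrite Rmin_left by lra. rewrite (Rabs_minus_sym a b), (Rabs_pos_eq (b - a)) by lra. now apply K.
  - rewrite Rmin_right by lra. rewrite (Rabs_minus_sym (exp (- a))), (Rabs_pos_eq (a - b)) by lra.
    apply K; lra.
Qed.

Lemma exp_int c b : 0 < c -> 0 <= b ->
  ex_RInt (fun s => exp (- (c * s))) 0 b /\ RInt (fun s => exp (- (c * s))) 0 b <= / c.
Proof.
  intros Hc Hb.
  assert (H : is_RInt (fun s => exp (- (c * s))) 0 b
     (minus ((fun s => - exp (- (c * s)) / c) b) ((fun s => - exp (- (c * s)) / c) 0))).
  { apply (is_RInt_derive (fun s => - exp (- (c * s)) / c) (fun s => exp (- (c * s)))).
    - intros x _. auto_derive. trivial. field. lra.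
    - intros x _. apply (ex_derive_continuous (K:=R_AbsRing) (V:=R_NormedModule)).
      auto_derive. trivial. }
  split. eexists; exact H.
  rewrite (is_RInt_unique _ _ _ _ H). unfold minus, plus, opp; simpl.
  rewrite Rmult_0_r, Ropp_0, exp_0. pose proof (exp_pos (- (c * b))).
  apply Rmult_le_reg_r with c. lra.
  rewrite Rinv_l by lra.
  match goal with |- ?x <= _ => replace x with (1 - exp (- (c * b))) by (field; lra) end; lra.
Qed.

From Stdlib Require Import Classical.

Definition Hbd (p : R -> R -> R) pstar pinf sstar := forall s S, 0 <= s ->
     pstar * ind_gt sstar s <= p s S /\ p s S <= pinf.
Definition Hlp (p : R -> R -> R) L := forall s1 s2 S1 S2, 0 < s1 -> 0 < s2 ->
      Rabs (p s1 S1 - p s2 S2) <= L * (Rabs (s1 - s2) + Rabs (S1 - S2)).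
Definition Ai (p : R -> R -> R) S s := RInt (fun tau => p tau S) 0 s.

Lemma p_range p pstar pinf sstar s S : 0 < pstar -> Hbd p pstar pinf sstar -> 0 <= s ->
  0 <= p s S <= pinf.
Proof.
  intros Hp H Hs. destruct (H s S Hs) as [H1 H2]. split; auto.
  unfold ind_gt in H1. destruct (Rlt_dec sstar s); lra.
Qed.

Lemma exRp p L S a b : 0 <= L -> Hlp p L -> 0 <= a <= b -> ex_RInt (fun t => p t S) a b.
Proof.
  intros HL Hl Hab.
  destruct (ext0 (fun t => p t S) L HL) as [g [Hg1 Hg2]].
  { intros u v Hu Hv. specialize (Hl u v S S Hu Hv).
    replace (S - S) with 0 in Hl by ring. rewrite Rabs_R0, Rplus_0_r in Hl. exact Hl. }
  apply (ex_RInt_ext g). intros x Hx. rewrite Rmin_left in Hx by lra. apply Hg1; lra.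
  apply (ex_RInt_continuous (V := R_CompleteNormedModule)). intros z _. apply (lip_cont g z L). intro u. apply Hg2.
Qed.

Lemma A_range p pstar pinf sstar L S s : 0 < pstar -> Hbd p pstar pinf sstar -> 0 <= L -> Hlp p L ->
  0 <= s -> 0 <= Ai p S s <= pinf * s.
Proof.
  intros Hp Hb HL Hl Hs. unfold Ai. split.
  - apply RInt_ge_0; auto. apply (exRp p L); auto; lra.
    intros x Hx. apply (p_range p pstar pinf sstar); auto; lra.
  - replace (pinf * s) with ((s - 0) * pinf) by ring. apply RInt_upper; auto.
    apply (exRp p L); auto; lra.
    intros x Hx. apply (p_range p pstar pinf sstar); auto; lra.
Qed.

Lemma A_lower p pstar pinf sstar L S s : 0 < pstar -> 0 < sstar -> Hbd p pstar pinf sstar -> 0 <= L -> Hlp p L ->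
  0 <= s -> pstar * (s - sstar) <= Ai p S s.
Proof.
  intros Hp Hss Hb HL Hl Hs.
  destruct (Rle_dec s sstar) as [H|H].
  - pose proof (A_range p pstar pinf sstar L S s Hp Hb HL Hl Hs). nra.
  - unfold Ai. rewrite <- (RInt_Chasles (fun t => p t S) 0 sstar s).
    2,3: apply (exRp p L); auto; lra.
    pose proof (A_range p pstar pinf sstar L S sstar Hp Hb HL Hl ltac:(lra)) as [H1 _].
    unfold Ai in H1.
    assert ((s - sstar) * pstar <= RInt (fun t => p t S) sstar s).
    { apply RInt_lower. lra. apply (exRp p L); auto; lra.
      intros x Hx. destruct (Hb x S ltac:(lra)) as [H2 _]. unfold ind_gt in H2.
      destruct (Rlt_dec sstar x); lra. }
    change (plus ?a ?b) with (a + b). nra.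
Qed.

Lemma A_lip_s p pstar pinf sstar L S t s : 0 < pstar -> Hbd p pstar pinf sstar -> 0 <= L -> Hlp p L ->
  0 <= t <= s -> Rabs (Ai p S s - Ai p S t) <= pinf * (s - t).
Proof.
  intros Hp Hb HL Hl Hts. unfold Ai.
  rewrite <- (RInt_Chasles (fun t => p t S) 0 t s).
  2,3: apply (exRp p L); auto; lra.
  change (plus ?a ?b) with (a + b).
  assert (E : forall x y : R, x + y - x = y) by (intros; ring). rewrite E.
  replace (pinf * (s - t)) with ((s - t) * pinf) by ring.
  apply RInt_bound. lra. apply (exRp p L); auto; lra.
  intros x Hx. pose proof (p_range p pstar pinf sstar x S Hp Hb ltac:(lra)).
  rewrite Rabs_pos_eq; lra.
Qed.

Lemma A_lip_S p L S1 S2 s : 0 <= L -> Hlp p L ->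
  0 <= s -> Rabs (Ai p S1 s - Ai p S2 s) <= s * (L * Rabs (S1 - S2)).
Proof.
  intros HL Hl Hs. unfold Ai.
  rewrite <- (RInt_minus (fun t => p t S1) (fun t => p t S2)).
  2,3: apply (exRp p L); auto; lra.
  replace s with (s - 0) at 2 by ring.
  apply RInt_bound. lra. apply (ex_RInt_minus (fun t => p t S1) (fun t => p t S2)).
  1,2: apply (exRp p L); auto; lra.
  intros x Hx. specialize (Hl x x S1 S2 ltac:(lra) ltac:(lra)).
  replace (x - x) with 0 in Hl by ring. rewrite Rabs_R0, Rplus_0_l in Hl. exact Hl.
Qed.

Lemma Rmax_lip u v : Rabs (Rmax 0 u - Rmax 0 v) <= Rabs (u - v).
Proof.
  unfold Rmax. destruct (Rle_dec 0 u); destruct (Rle_dec 0 v);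
  apply Rabs_le; split; 
  try (pose proof (Rle_abs (u - v)); pose proof (Rle_abs (- (u - v))); rewrite Rabs_Ropp in *; lra).
Qed.

Lemma expfac_ex p pstar pinf sstar L S a b : 0 < pstar -> 0 < pinf -> Hbd p pstar pinf sstar -> 0 <= L -> Hlp p L ->
  0 <= a <= b -> ex_RInt (expfac p S) a b.
Proof.
  intros Hp Hpi Hb HL Hl Hab.
  set (h := fun s => exp (- Ai p S (Rmax 0 s))).
  assert (Hh : forall u v, Rabs (h u - h v) <= pinf * Rabs (u - v)).
  { intros u v. unfold h.
    eapply Rle_trans. apply exp_diff.
    pose proof (Rmax_l 0 u). pose proof (Rmax_l 0 v).
    pose proof (A_range p pstar pinf sstar L S (Rmax 0 u) Hp Hb HL Hl ltac:(lra)).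
    pose proof (A_range p pstar pinf sstar L S (Rmax 0 v) Hp Hb HL Hl ltac:(lra)).
    assert (Hm : exp (- Rmin (Ai p S (Rmax 0 u)) (Ai p S (Rmax 0 v))) <= 1).
    { rewrite <- exp_0. apply exp_le_exp. apply Rmin_case; lra. }
    assert (HA : Rabs (Ai p S (Rmax 0 u) - Ai p S (Rmax 0 v)) <= pinf * Rabs (u - v)).
    { pose proof (Rmax_lip u v) as HM.
      pose proof (Rle_abs (Rmax 0 u - Rmax 0 v)) as HM1.
      pose proof (Rle_abs (- (Rmax 0 u - Rmax 0 v))) as HM2. rewrite Rabs_Ropp in HM2.
      destruct (Rle_dec (Rmax 0 u) (Rmax 0 v)).
      - rewrite Rabs_minus_sym. eapply Rle_trans.
        apply (A_lip_s p pstar pinf sstar L); auto; lra.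
        apply Rmult_le_compat_l; lra.
      - eapply Rle_trans.
        apply (A_lip_s p pstar pinf sstar L); auto; lra.
        apply Rmult_le_compat_l; lra. }
    pose proof (Rabs_pos (Ai p S (Rmax 0 u) - Ai p S (Rmax 0 v))).
    pose proof (exp_pos (- Rmin (Ai p S (Rmax 0 u)) (Ai p S (Rmax 0 v)))).
    nra. }
  apply (ex_RInt_ext h). intros x Hx. rewrite Rmin_left in Hx by lra.
  unfold h, expfac. rewrite Rmax_right by lra. reflexivity.
  apply (ex_RInt_continuous (V := R_CompleteNormedModule)). intros z _.
  apply (lip_cont h z pinf). intro u. apply Hh.
Qed.

Lemma expfac_upper p pstar pinf sstar L S s : 0 < pstar -> 0 < sstar -> Hbd p pstar pinf sstar -> 0 <= L -> Hlp p L ->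
  0 <= s -> expfac p S s <= exp (pstar * sstar) * exp (- (pstar * s)).
Proof.
  intros. unfold expfac. rewrite <- exp_plus. apply exp_le_exp.
  pose proof (A_lower p pstar pinf sstar L S s H H0 H1 H2 H3 H4). unfold Ai in H5. lra.
Qed.

Lemma expfac_lower p pstar pinf sstar L S s : 0 < pstar -> Hbd p pstar pinf sstar -> 0 <= L -> Hlp p L ->
  0 <= s <= 1 -> exp (- pinf) <= expfac p S s.
Proof.
  intros. unfold expfac. apply exp_le_exp.
  pose proof (A_range p pstar pinf sstar L S s H H0 H1 H2 ltac:(lra)). unfold Ai in H4.
  assert (0 <= pinf). { pose proof (p_range p pstar pinf sstar 0 S H H0 ltac:(lra)). lra. }
  nra.
Qed.

Lemma s_exp c s : 0 < c -> 0 <= s -> s * exp (- (c * s)) <= (2 / c) * exp (- ((c / 2) * s)).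
Proof.
  intros Hc Hs.
  replace (exp (- (c * s))) with (exp (- ((c / 2) * s)) * exp (- ((c / 2) * s))).
  2:{ rewrite <- exp_plus. f_equal. field. }
  pose proof (exp_ineq1_le ((c / 2) * s)).
  assert (Hk : exp ((c / 2) * s) * exp (- ((c / 2) * s)) = 1).
  { rewrite <- exp_plus. replace (c / 2 * s + - (c / 2 * s)) with 0 by ring. apply exp_0. }
  set (e := exp (- ((c / 2) * s))) in *. set (E := exp ((c / 2) * s)) in *.
  assert (He : 0 < e) by apply exp_pos.
  assert (s * e <= 2 / c).
  { apply Rmult_le_reg_l with (c / 2). lra.
    replace (c / 2 * (2 / c)) with 1 by (field; lra).
    rewrite <- Hk. replace (c / 2 * (s * e)) with ((c / 2 * s) * e) by ring.
    apply Rmult_le_compat_r; lra. }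
  nra.
Qed.

Lemma expfac_diff p pstar pinf sstar L S1 S2 s : 0 < pstar -> 0 < sstar -> Hbd p pstar pinf sstar -> 0 <= L -> Hlp p L ->
  0 <= s -> Rabs (expfac p S1 s - expfac p S2 s) <=
     exp (pstar * sstar) * (L * Rabs (S1 - S2)) * (2 / pstar) * exp (- ((pstar / 2) * s)).
Proof.
  intros Hp Hss Hb HL Hl Hs. unfold expfac.
  eapply Rle_trans. apply exp_diff.
  fold (Ai p S1 s) (Ai p S2 s).
  pose proof (A_lower p pstar pinf sstar L S1 s Hp Hss Hb HL Hl Hs).
  pose proof (A_lower p pstar pinf sstar L S2 s Hp Hss Hb HL Hl Hs).
  assert (H1 : exp (- Rmin (Ai p S1 s) (Ai p S2 s)) <= exp (pstar * sstar) * exp (- (pstar * s))).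
  { rewrite <- exp_plus. apply exp_le_exp. apply Rmin_case; lra. }
  pose proof (A_lip_S p L S1 S2 s HL Hl Hs) as H2.
  pose proof (s_exp pstar s Hp Hs) as H3.
  pose proof (exp_pos (pstar * sstar)). pose proof (exp_pos (- (pstar * s))).
  pose proof (Rabs_pos (S1 - S2)). pose proof (Rabs_pos (Ai p S1 s - Ai p S2 s)).
  pose proof (exp_pos (- Rmin (Ai p S1 s) (Ai p S2 s))).
  apply Rle_trans with (exp (pstar * sstar) * exp (- (pstar * s)) * (s * (L * Rabs (S1 - S2)))).
  { apply Rmult_le_compat; auto; lra. }
  assert (0 <= L * Rabs (S1 - S2)) by (apply Rmult_le_pos; auto).
  replace (exp (pstar * sstar) * exp (- (pstar * s)) * (s * (L * Rabs (S1 - S2)))) with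
    (exp (pstar * sstar) * (L * Rabs (S1 - S2)) * (s * exp (- (pstar * s)))) by ring.
  set (K := exp (pstar * sstar) * (L * Rabs (S1 - S2))).
  assert (0 <= K) by (unfold K; apply Rmult_le_pos; lra).
  replace (K * (2 / pstar) * exp (- (pstar / 2 * s))) with (K * (2 / pstar * exp (- (pstar / 2 * s)))) by ring.
  apply Rmult_le_compat_l; auto.
Qed.

Lemma improper (f : R -> R) K :
  (forall a b, 0 <= a <= b -> ex_RInt f a b) -> (forall x, 0 < x -> 0 <= f x) ->
  (forall b, 0 <= b -> RInt f 0 b <= K) ->
  exists l, is_RInt_gen f (at_point 0) (Rbar_locally p_infty) l /\
    (forall b, 0 <= b -> RInt f 0 b <= l) /\
    filterlim (fun b => RInt f 0 b) (Rbar_locally p_infty) (locally l).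
Proof.
  intros Hex Hpos HK.
  set (E := fun x => exists b, 0 <= b /\ x = RInt f 0 b).
  destruct (completeness E) as [l [Hub Hlub]].
  { exists K. intros x [b [Hb ->]]. auto. }
  { exists (RInt f 0 0). exists 0. split; [lra|reflexivity]. }
  assert (Hle : forall b, 0 <= b -> RInt f 0 b <= l).
  { intros b Hb. apply Hub. exists b; auto. }
  assert (Hmono : forall a b, 0 <= a <= b -> RInt f 0 a <= RInt f 0 b).
  { intros a b Hab. rewrite <- (RInt_Chasles f 0 a b) by (apply Hex; lra).
    assert (0 <= RInt f a b).
    { apply RInt_ge_0. lra. apply Hex; lra. intros x Hx; apply Hpos; lra. }
    change (plus ?x ?y) with (x + y). lra. }
  assert (Hlim : filterlim (fun b => RInt f 0 b) (Rbar_locally p_infty) (locally l)).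
  { apply filterlim_locally. intro eps.
    assert (Hb0 : exists b0, 0 <= b0 /\ l - eps < RInt f 0 b0).
    { destruct (classic (exists b0, 0 <= b0 /\ l - eps < RInt f 0 b0)) as [H|H]; auto.
      exfalso. assert (l <= l - eps).
      { apply Hlub. intros x [b [Hb ->]]. apply Rnot_lt_le. intro Hc. apply H. exists b; auto. }
      pose proof (cond_pos eps). lra. }
    destruct Hb0 as [b0 [Hb0 Hl0]].
    exists b0. intros x Hx. apply ball_R.
    pose proof (Hle x ltac:(lra)). pose proof (Hmono b0 x ltac:(lra)).
    apply Rabs_def1; lra. }
  exists l. split; [| split; auto].
  unfold is_RInt_gen.
  apply (filterlimi_lim_ext_loc (fun ab => RInt f (fst ab) (snd ab))).
  - exists (fun a => a = 0) (fun b => 0 < b).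
    reflexivity. exists 0; intros; lra.
    intros x y -> Hy. simpl. apply (RInt_correct (V := R_CompleteNormedModule)). apply Hex; lra.
  - apply filterlim_locally. intro eps.
    destruct (proj1 (filterlim_locally _ l) Hlim eps) as [M HM].
    exists (fun a => a = 0) (fun b => M < b). reflexivity. exists M; auto.
    intros x y -> Hy. simpl. apply HM; auto.
Qed.

Lemma limit_bound (g1 g2 : R -> R) l1 l2 C :
  filterlim g1 (Rbar_locally p_infty) (locally l1) ->
  filterlim g2 (Rbar_locally p_infty) (locally l2) ->
  (forall b, 0 <= b -> Rabs (g1 b - g2 b) <= C) -> Rabs (l1 - l2) <= C.
Proof.
  intros H1 H2 HC. apply Rnot_lt_le. intro Hc.
  assert (He : 0 < (Rabs (l1 - l2) - C) / 2) by lra.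
  destruct (proj1 (filterlim_locally _ l1) H1 (mkposreal _ He)) as [M1 HM1].
  destruct (proj1 (filterlim_locally _ l2) H2 (mkposreal _ He)) as [M2 HM2].
  set (b := Rmax 0 (Rmax M1 M2) + 1).
  assert (Hb0 : 0 <= b). { unfold b. pose proof (Rmax_l 0 (Rmax M1 M2)). lra. }
  assert (Hb1 : M1 < b). { unfold b. pose proof (Rmax_r 0 (Rmax M1 M2)). pose proof (Rmax_l M1 M2). lra. }
  assert (Hb2 : M2 < b). { unfold b. pose proof (Rmax_r 0 (Rmax M1 M2)). pose proof (Rmax_r M1 M2). lra. }
  specialize (HM1 b Hb1). specialize (HM2 b Hb2).
  assert (HM1' : Rabs (g1 b - l1) < (Rabs (l1 - l2) - C) / 2) by exact HM1.
  assert (HM2' : Rabs (g2 b - l2) < (Rabs (l1 - l2) - C) / 2) by exact HM2.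
  specialize (HC b Hb0).
  assert (Rabs (l1 - l2) <= Rabs (g1 b - l1) + Rabs (g1 b - g2 b) + Rabs (g2 b - l2)).
  { replace (l1 - l2) with (- (g1 b - l1) + (g1 b - g2 b) + (g2 b - l2)) by ring.
    eapply Rle_trans. apply Rabs_triang. rewrite <- (Rabs_Ropp (g1 b - l1)).
    pose proof (Rabs_triang (- (g1 b - l1)) (g1 b - g2 b)). lra. }
  lra.
Qed.

Theorem mainTheorem5 (p : R -> R -> R) (pstar pinf sstar : R)
  (hpstar : 0 < pstar) (hpinf : 0 < pinf) (hsstar : 0 < sstar)
  (hW : W1inf p)
  (hbounds : forall s S, 0 <= s ->
     pstar * ind_gt sstar s <= p s S /\ p s S <= pinf) :
  (exists M, forall S, Rabs (F p S) <= M) /\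
  (exists L, forall S1 S2, Rabs (F p S1 - F p S2) <= L * Rabs (S1 - S2)).
Proof.
  destruct hW as [_ [L0 HL0]].
  set (L := Rmax L0 0).
  assert (HL : 0 <= L) by apply Rmax_r.
  assert (Hl : Hlp p L).
  { intros s1 s2 S1 S2 H1 H2. eapply Rle_trans. apply HL0; auto.
    apply Rmult_le_compat_r. pose proof (Rabs_pos (s1 - s2)). pose proof (Rabs_pos (S1 - S2)). lra.
    apply Rmax_l. }
  assert (Hb : Hbd p pstar pinf sstar) by exact hbounds.
  set (E := exp (pstar * sstar)).
  set (m := exp (- pinf)).
  assert (HE : 0 < E) by apply exp_pos.
  assert (Hval : forall S, exists l, F p S = / l /\ m <= l /\
     filterlim (fun b => RInt (expfac p S) 0 b) (Rbar_locally p_infty) (locally l)).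
  { intro S.
    destruct (improper (expfac p S) (E * / pstar)) as [l [Hg [Hle Hlim]]].
    - intros a b Hab. apply (expfac_ex p pstar pinf sstar L); auto.
    - intros x _. unfold expfac. left; apply exp_pos.
    - intros b Hb0. destruct (exp_int pstar b hpstar Hb0) as [Hex Hint].
      apply Rle_trans with (RInt (fun s => E * exp (- (pstar * s))) 0 b).
      + apply RInt_le; auto. apply (expfac_ex p pstar pinf sstar L); auto; lra.
        exact (ex_RInt_scal _ 0 b E Hex).
        intros x Hx. apply (expfac_upper p pstar pinf sstar L); auto; lra.
      + assert (Hs : RInt (fun s => E * exp (- (pstar * s))) 0 b = E * RInt (fun s => exp (- (pstar * s))) 0 b)
          by exact (RInt_scal _ 0 b E Hex).
        rewrite Hs. apply Rmult_le_compat_l; lra.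
    - exists l. split; [| split; auto].
      + unfold F. rewrite (is_RInt_gen_unique _ _ Hg). reflexivity.
      + apply Rle_trans with (RInt (expfac p S) 0 1); [| apply Hle; lra].
        replace m with ((1 - 0) * m) by ring. apply RInt_lower. lra.
        apply (expfac_ex p pstar pinf sstar L); auto; lra.
        intros x Hx. apply (expfac_lower p pstar pinf sstar L); auto; lra. }
  assert (Hm : 0 < m) by apply exp_pos.
  split.
  - exists (/ m). intro S. destruct (Hval S) as [l [-> [Hml _]]].
    rewrite Rabs_pos_eq. apply Rinv_le_contravar; auto.
    left; apply Rinv_0_lt_compat; lra.
  - set (C0 := E * L * (2 / pstar) * / (pstar / 2)).
    exists (C0 / (m * m)). intros S1 S2.
    destruct (Hval S1) as [l1 [-> [Hm1 Hlim1]]]. destruct (Hval S2) as [l2 [-> [Hm2 Hlim2]]].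
    assert (Hd : Rabs (l1 - l2) <= C0 * Rabs (S1 - S2)).
    { apply (limit_bound _ _ l1 l2 _ Hlim1 Hlim2). intros b Hb0.
      assert (Hx1 : ex_RInt (expfac p S1) 0 b) by (apply (expfac_ex p pstar pinf sstar L); auto; lra).
      assert (Hx2 : ex_RInt (expfac p S2) 0 b) by (apply (expfac_ex p pstar pinf sstar L); auto; lra).
      assert (Hmi : RInt (fun x => expfac p S1 x - expfac p S2 x) 0 b = RInt (expfac p S1) 0 b - RInt (expfac p S2) 0 b)
        by exact (RInt_minus _ _ 0 b Hx1 Hx2).
      rewrite <- Hmi.
      destruct (exp_int (pstar / 2) b ltac:(lra) Hb0) as [Hex Hint].
      set (K := E * (L * Rabs (S1 - S2)) * (2 / pstar)).
      assert (HK : 0 <= K).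
      { unfold K. pose proof (Rabs_pos (S1 - S2)).
        apply Rmult_le_pos. apply Rmult_le_pos. lra. apply Rmult_le_pos; lra.
        unfold Rdiv. apply Rmult_le_pos. lra. left; apply Rinv_0_lt_compat; lra. }
      eapply Rle_trans. apply (RInt_abs_le _ (fun s => K * exp (- ((pstar / 2) * s)))). lra.
      exact (ex_RInt_minus _ _ 0 b Hx1 Hx2).
      exact (ex_RInt_scal _ 0 b K Hex).
      intros x Hx. apply (expfac_diff p pstar pinf sstar L); auto; lra.
      assert (Hs : RInt (fun s => K * exp (- (pstar / 2 * s))) 0 b = K * RInt (fun s => exp (- (pstar / 2 * s))) 0 b)
          by exact (RInt_scal _ 0 b K Hex).
      rewrite Hs. apply Rle_trans with (K * / (pstar / 2)).
      apply Rmult_le_compat_l; auto.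
      right. unfold K, C0. ring. }
    replace (/ l1 - / l2) with ((l2 - l1) / (l1 * l2)) by (field; lra).
    unfold Rdiv. rewrite Rabs_mult, Rabs_inv, (Rabs_pos_eq (l1 * l2)) by nra.
    rewrite Rabs_minus_sym.
    assert (Hi : / (l1 * l2) <= / (m * m)).
    { apply Rinv_le_contravar. nra. apply Rmult_le_compat; lra. }
    assert (0 < / (l1 * l2)) by (apply Rinv_0_lt_compat; nra).
    apply Rle_trans with (C0 * Rabs (S1 - S2) * / (m * m)).
    apply Rmult_le_compat; auto. apply Rabs_pos. lra.
    right. ring.
Qed.
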